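(* Let $n=rk$, $f:\mathbb{F}_{2^n}\to\mathbb{F}_{2^k}$, $i\in\{0,\dots,k-1\}$ and $b\in\mathbb{F}_{2^k}$. If $\gamma_1,\gamma_2,\gamma_3\in\mathbb{F}_{2^n}^*$ are $(i,b)$-Frobenius translators of $f$ with $\gamma_1+\gamma_2+\gamma_3\neq 0$, then $\gamma_1+\gamma_2+\gamma_3$ is an $(i,b)$-Frobenius translator of $f$.
   Context: For $n=rk$, a function $f:\mathbb{F}_{p^n}\to\mathbb{F}_{p^k}$, an element $\gamma\in\mathbb{F}_{p^n}^*$, an element $b\in\mathbb{F}_{p^k}$ and $i\in\{0,\dots,k-1\}$, $\gamma$ is called an $(i,b)$-Frobenius translator of $f$ if $f(x+u\gamma)-f(x)=u^{p^i}b$ for all $x\in\mathbb{F}_{p^n}$ and all $u\in\mathbb{F}_{p^k}$. Here $p=2$. *)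

(* Defs.v *)
From HB Require Import structures.
From mathcomp Require Import all_boot all_order all_algebra all_field.
Set Implicit Arguments. Unset Strict Implicit. Unset Printing Implicit Defensive.
Import GRing.Theory.
Local Open Scope ring_scope.

(* F_{2^n} is modelled by a finite field L of characteristic 2 with
   #|L| = 2^n; F_{2^k} (k | n) is its unique subfield of order 2^k,
   i.e. the set of x in L with x^(2^k) = x. *)
Definition in_subfield (L : fieldType) (k : nat) (x : L) : bool :=
  x ^+ (2 ^ k) == x.

Definition frobenius_translator (L : fieldType) (k : nat) (f : L -> L)
    (gamma : L) (i : nat) (b : L) : Prop :=
  gamma != 0 /\
  forall (x u : L), in_subfield k u ->
    f (x + u * gamma) - f x = u ^+ (2 ^ i) * b.

(* Main.v *)
Require Import Defs.
From HB Require Import structures.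
From mathcomp Require Import all_boot all_order all_algebra all_field.
Import GRing.Theory.
Local Open Scope ring_scope.

Theorem corollary1 (L : finFieldType) (r k : nat) (f : L -> L) (i : nat)
    (b g1 g2 g3 : L) :
  2%N \in [pchar L] ->
  #|L| = (2 ^ (r * k))%N ->
  (forall x : L, in_subfield k (f x)) ->
  (i < k)%N ->
  in_subfield k b ->
  frobenius_translator k f g1 i b ->
  frobenius_translator k f g2 i b ->
  frobenius_translator k f g3 i b ->
  g1 + g2 + g3 != 0 ->
  frobenius_translator k f (g1 + g2 + g3) i b.
Proof.
move=> ch _ _ _ _ [_ h1] [_ h2] [_ h3] nz; split => // x u hu.
set c := u ^+ (2 ^ i) * b.
have e1 := h1 x u hu.
have e2 := h2 (x + u * g1) u hu.
have e3 := h3 (x + u * g1 + u * g2) u hu.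
have cc : c + c = 0 by rewrite -mulr2n -mulr_natr (GRing.pcharf0 ch) mulr0.
have -> : x + u * (g1 + g2 + g3) = x + u * g1 + u * g2 + u * g3 by rewrite !mulrDr !addrA.
apply/eqP; rewrite subr_eq; apply/eqP.
move/eqP: e3; rewrite subr_eq => /eqP ->.
move/eqP: e2; rewrite subr_eq => /eqP ->.
move/eqP: e1; rewrite subr_eq => /eqP ->.
by rewrite addrA cc add0r.
Qed.
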